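(* Let $\mathcal{H}$ be a separable Hilbert space, $\{\mathcal{H}_j\}_{j\in J}$ ($J\subseteq\mathbb{Z}$) a sequence of closed subspaces of $\mathcal{H}$, and $K\in\mathcal{B}(\mathcal{H})$ with closed range $\mathcal{R}(K)$. Let $\{\Lambda_j\}_{j\in J}$ and $\{\Theta_j\}_{j\in J}$ be $g$-Bessel sequences with $\Lambda_j,\Theta_j\in\mathcal{B}(\mathcal{H},\mathcal{H}_j)$, and let $U:\mathcal{R}(K)\to\mathcal{R}(K)$, $Uf=\sum_{j\in J}\Lambda_j^{\ast}\Theta_jf$, satisfy $\|I_{\mathcal{R}(K)}-U\|<1$ (i.e. $\{\Theta_j\}$ is an approximate $K$-$g$-dual of $\{\Lambda_j\}$). Then $U$ is invertible on $\mathcal{R}(K)$, and $\{\Theta_jU^{-1}\}_{j\in J}$ (operators $\mathcal{R}(K)\to\mathcal{H}_j$) is a $K$-$g$-dual of $\{\Lambda_j\}_{j\in J}$, i.e. it is a $g$-Bessel sequence on $\mathcal{R}(K)$ and $\sum_{j\in J}\Lambda_j^{\ast}\Theta_jU^{-1}f=f$ for all $f\in\mathcal{R}(K)$.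
   Context: A sequence $\{\Lambda_j\in\mathcal{B}(\mathcal{H},\mathcal{H}_j)\}_{j\in J}$ is $g$-Bessel if there is $B>0$ with $\sum_{j\in J}\|\Lambda_jf\|^2\leq B\|f\|^2$ for all $f\in\mathcal{H}$; $T_\Lambda:\{g_j\}\mapsto\sum_j\Lambda_j^\ast g_j$ denotes its synthesis operator, so $U=T_\Lambda T_\Theta^\ast$ restricted to $\mathcal{R}(K)$. The sequences are called approximately dual $K$-$g$-frames if $\|I_{\mathcal{R}(K)}-T_\Lambda T_\Theta^\ast\|<1$, where $T_\Lambda T_\Theta^\ast$ is regarded as an operator on $\mathcal{R}(K)$. *)

(* Defs.v *)
From mathcomp Require Import all_boot all_order all_algebra.
From mathcomp Require Import all_classical all_reals all_analysis.
From mathcomp Require Import complex finmap.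
Set Implicit Arguments. Unset Strict Implicit. Unset Printing Implicit Defensive.
Import Order.TTheory GRing.Theory Num.Theory numFieldNormedType.Exports.
Local Open Scope classical_set_scope.
Local Open Scope ring_scope.

Section HilbertDefs.
Variable R : realType.
Variable V : completeNormedModType R[i].

(* real-valued norm: the norm of V takes values in R[i] but is real *)
Definition nrm (x : V) : R := complex.Re `|x|.

Definition is_inner_product (ip : V -> V -> R[i]) : Prop :=
  [/\ (forall (a : R[i]) (x y z : V), ip (a *: x + y) z = a * ip x z + ip y z),
      (forall x y : V, ip x y = (ip y x)^*) &
      (forall x : V, `|x| ^+ 2 = ip x x)].

Definition separable_space : Prop :=
  exists D : set V, countable D /\ closure D = setT.

Definition closed_subspace (S : set V) : Prop :=
  [/\ S 0, (forall (a : R[i]) (x y : V), S x -> S y -> S (a *: x + y)) & closed S].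

Definition bounded_linear (T : V -> V) : Prop :=
  (forall (a : R[i]) (x y : V), T (a *: x + y) = a *: T x + T y) /\
  exists M : R, forall x, nrm (T x) <= M * nrm x.

Definition bounded_linear_on (S : set V) (T : V -> V) : Prop :=
  (forall (a : R[i]) (x y : V), S x -> S y -> T (a *: x + y) = a *: T x + T y) /\
  exists M : R, forall x, S x -> nrm (T x) <= M * nrm x.

(* unconditional convergence of \sum_{j in J} u j to s (net of finite subsets of J) *)
Definition HasSum (J : set int) (u : int -> V) (s : V) : Prop :=
  forall e : R, 0 < e -> exists F0 : {fset int},
    (forall j, j \in F0 -> J j) /\
    forall F : {fset int}, {subset F0 <= F} -> (forall j, j \in F -> J j) ->
      nrm (\sum_(j <- F) u j - s) < e.

(* g-Bessel sequence on the subspace S: sum_j ||L_j f||^2 <= B ||f||^2, f in S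
   (for nonnegative terms the sum is the sup of the finite partial sums) *)
Definition gBessel_on (S : set V) (J : set int) (L : int -> V -> V) : Prop :=
  exists B : R, 0 < B /\ forall f, S f -> forall F : {fset int},
    (forall j, j \in F -> J j) ->
    \sum_(j <- F) nrm (L j f) ^+ 2 <= B * nrm f ^+ 2.

Definition opnorm_on (S : set V) (T : V -> V) : \bar R :=
  ereal_sup [set (nrm (T f))%:E | f in [set f | S f /\ nrm f <= 1]].

End HilbertDefs.

(* Main.v *)
Require Import Defs.
From mathcomp Require Import all_boot all_order all_algebra.
From mathcomp Require Import all_classical all_reals all_analysis.
From mathcomp Require Import complex finmap.
Import Order.TTheory GRing.Theory Num.Theory numFieldNormedType.Exports.
Local Open Scope classical_set_scope.
Local Open Scope ring_scope.
From mathcomp Require Import ring lra.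
Section Helpers1.
Local Open Scope complex_scope.

Section N.
Context {R : realType}.
Context {V : completeNormedModType R[i]}.

Lemma nrmE (x : V) : `|x| = (nrm x)%:C.
Proof.
rewrite /nrm; have := normr_ge0 x; case: `|x| => a b.
by rewrite lecE /= => /andP[/eqP -> _].
Qed.

Lemma nrm_ge0 (x : V) : 0 <= nrm x.
Proof. by have := normr_ge0 x; rewrite nrmE lecR. Qed.

Lemma nrmD (x y : V) : nrm (x + y) <= nrm x + nrm y.
Proof. by have := ler_normD x y; rewrite !nrmE -rmorphD lecR. Qed.

Lemma nrmN (x : V) : nrm (- x) = nrm x.
Proof. by rewrite /nrm normrN. Qed.

Lemma nrmB (x y : V) : nrm (x - y) = nrm (y - x).
Proof. by rewrite -nrmN opprB. Qed.

Lemma nrm0 : nrm (0 : V) = 0.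
Proof. by rewrite /nrm normr0. Qed.

Lemma nrm_eq0 (x : V) : nrm x = 0 -> x = 0.
Proof. by move=> h; apply/normr0_eq0; rewrite nrmE h. Qed.

Lemma nrmZ (a : R[i]) (x : V) : nrm (a *: x) = complex.Re `|a| * nrm x.
Proof.
rewrite /nrm normrZ. have := normr_ge0 a; case: `|a| => c d.
rewrite lecE /= => /andP[/eqP -> _]. rewrite nrmE /=. by simpc.
Qed.

Lemma nrmZR (c : R) (x : V) : nrm (c%:C *: x) = `|c| * nrm x.
Proof.
rewrite nrmZ; congr (_ * _). rewrite normc_def /= expr0n /= addr0 sqrtr_sqr //.
Qed.

End N.

Lemma Re_norm_ge0 {R : realType} (a : R[i]) : 0 <= complex.Re `|a|.
Proof. by have := normr_ge0 a; rewrite lecE => /andP[_]. Qed.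

Lemma ge0_ReE {R : realType} (z : R[i]) : 0 <= z -> z = (complex.Re z)%:C.
Proof. by case: z => a b; rewrite lecE /= => /andP[/eqP -> _]. Qed.

End Helpers1.
Section Helpers2.
Local Open Scope complex_scope.

Section S.
Context {R : realType}.
Context {V : completeNormedModType R[i]}.
Context {J : set int}.

Lemma HasSum_ext (u v : int -> V) s : (forall j, J j -> u j = v j) ->
  HasSum J u s -> HasSum J v s.
Proof.
move=> huv hs e he; have [F0 [HF0 HF]] := hs e he; exists F0; split => // F sF FJ.
rewrite -(eq_big_seq (F1:=u)); first exact: HF.
by move=> j /FJ /huv.
Qed.

Lemma le0_eps (x : R) : (forall e, 0 < e -> x < e) -> x <= 0.
Proof.
move=> h; rewrite leNgt; apply/negP => x0.
by have := h _ x0; rewrite ltxx.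
Qed.

Lemma HasSum_unique (u : int -> V) s t : HasSum J u s -> HasSum J u t -> s = t.
Proof.
move=> hs ht; apply/subr0_eq/nrm_eq0/le_anti; rewrite nrm_ge0 andbT.
apply: le0_eps => e he.
have he2 : 0 < e / 2 by rewrite divr_gt0.
have [F1 [HF1 H1]] := hs _ he2; have [F2 [HF2 H2]] := ht _ he2.
have sub1 : {subset F1 <= (F1 `|` F2)%fset} by move=> j jF; rewrite inE jF.
have sub2 : {subset F2 <= (F1 `|` F2)%fset} by move=> j jF; rewrite inE jF orbT.
have FJ : forall j, j \in (F1 `|` F2)%fset -> J j.
  by move=> j; rewrite inE => /orP[/HF1|/HF2].
have A := H1 _ sub1 FJ; have B := H2 _ sub2 FJ.
set S := \sum_(j <- _) u j in A B.
have -> : s - t = (S - t) - (S - s).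
  by rewrite opprB [RHS]addrC addrA subrK.
apply: (le_lt_trans (nrmD _ _)).
by rewrite nrmN [e in _ < e](splitr e) ltrD.
Qed.

Lemma HasSum_lin (u v : int -> V) s t (a : R[i]) : HasSum J u s -> HasSum J v t ->
  HasSum J (fun j => a *: u j + v j) (a *: s + t).
Proof.
move=> hs ht e he.
set c := complex.Re `|a| + 1.
have c0 : 0 < c by rewrite /c ltr_wpDl // Re_norm_ge0.
have he2 : 0 < e / 2 / c by rewrite !divr_gt0.
have [F1 [HF1 H1]] := hs _ he2; have [F2 [HF2 H2]] := ht _ he2.
exists (F1 `|` F2)%fset; split.
  by move=> j; rewrite inE => /orP[/HF1|/HF2].
move=> F sF FJ.
have sub1 : {subset F1 <= F} by move=> j jF; apply: sF; rewrite inE jF.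
have sub2 : {subset F2 <= F} by move=> j jF; apply: sF; rewrite inE jF orbT.
have A := H1 _ sub1 FJ; have B := H2 _ sub2 FJ.
rewrite big_split /= -scaler_sumr.
have -> : a *: \sum_(j <- F) u j + \sum_(j <- F) v j - (a *: s + t) =
   a *: (\sum_(j <- F) u j - s) + (\sum_(j <- F) v j - t).
  by rewrite scalerBr opprD !addrA; congr (_ + _); rewrite addrAC.
apply: (le_lt_trans (nrmD _ _)); rewrite nrmZ.
have ra : 0 <= complex.Re `|a| by rewrite Re_norm_ge0.
apply: (@le_lt_trans _ _ (complex.Re `|a| * (e / 2 / c) + e / 2 / c)).
  apply: lerD; last exact: ltW.
  by apply: ler_wpM2l => //; apply: ltW.
rewrite -[X in _ + X]mul1r -mulrDl -/c mulrC divfK ?gt_eqF //.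
by rewrite ltr_pdivrMr // ltr_pMr // ltr1n.
Qed.

End S.

End Helpers2.
Section Helpers3.
Local Open Scope complex_scope.

Section C.
Context {R : realType} {V : completeNormedModType R[i]}.
Variables (S : set V) (U : V -> V) (q : R).
Hypotheses (hSlin : forall a x y, S x -> S y -> S (a *: x + y))
  (hSc : closed S) (hUS : forall f, S f -> S (U f))
  (hUlin : forall a x y, S x -> S y -> U (a *: x + y) = a *: U x + U y)
  (hq0 : 0 <= q) (hq1 : q < 1)
  (hqb : forall f, S f -> nrm (f - U f) <= q * nrm f).

Lemma S_sub x y : S x -> S y -> S (x - y).
Proof. by move=> hx hy; rewrite addrC -scaleN1r; apply: hSlin. Qed.

Lemma S_add x y : S x -> S y -> S (x + y).
Proof. by move=> hx hy; rewrite -[x]scale1r; apply: hSlin. Qed.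

Lemma U_sub x y : S x -> S y -> U (x - y) = U x - U y.
Proof.
by move=> hx hy; rewrite addrC -scaleN1r hUlin // scaleN1r addrC.
Qed.

Lemma test (P : nat -> Prop) : (\forall n \near \oo, P n) -> exists N, forall n, (N <= n)%N -> P n.
Proof. move=> [N _ HN]. exists N => n hn. exact: HN. Qed.


Lemma near_ex (P : nat -> Prop) : (\forall n \near \oo, P n) -> exists N, forall n, (N <= n)%N -> P n.
Proof. move=> [N _ HN]. exists N => n hn. exact: HN. Qed.

Lemma surjU g : S g -> exists f, S f /\ U f = g.
Proof.
move=> Sg.
pose T f := g + (f - U f).
have ST f : S f -> S (T f) by move=> Sf; apply: S_add => //; apply: S_sub => //; exact: hUS.
have Tc x y : S x -> S y -> nrm (T x - T y) <= q * nrm (x - y).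
  move=> Sx Sy.
  have -> : T x - T y = (x - y) - U (x - y).
    rewrite U_sub // /T opprD addrACA subrr add0r opprB.
    by rewrite opprB addrACA [RHS]addrACA [- y - U x]addrC.
  by apply: hqb; exact: S_sub.
pose y n := iter n T g.
have Sy n : S (y n) by elim: n => // n IH; rewrite /y /= ; exact: ST.
set c := nrm (T g - g).
have c0 : 0 <= c by apply: nrm_ge0.
have step n : nrm (y n.+1 - y n) <= q ^+ n * c.
  elim: n => [|n IH]; first by rewrite expr0 mul1r.
  change (nrm (T (y n.+1) - T (y n)) <= q ^+ n.+1 * c).
  apply: (le_trans (Tc _ _ (Sy _) (Sy _))).
  by rewrite exprS -mulrA; apply: ler_wpM2l.
have q1 : 0 < 1 - q by rewrite subr_gt0.
pose D n := c * q ^+ n / (1 - q).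
have D0 n : 0 <= D n by rewrite /D divr_ge0 ?mulr_ge0 ?exprn_ge0 // ltW.
have bnd n m : nrm (y (n + m)%N - y n) <= D n - D (n + m)%N.
  elim: m => [|m IH]; first by rewrite addn0 !subrr nrm0.
  rewrite addnS.
  have -> : y (n + m).+1 - y n = (y (n + m).+1 - y (n + m)%N) + (y (n + m)%N - y n).
    by rewrite addrA subrK.
  apply: (le_trans (nrmD _ _)).
  have -> : D n - D (n + m).+1 = q ^+ (n + m) * c + (D n - D (n + m)%N).
    rewrite /D exprS; field; by rewrite gt_eqF.
  by apply: lerD.
have Dsmall : forall e, 0 < e -> exists N, D N < e.
  move=> e e0.
  have hg := @cvg_geometric R (c / (1 - q)) q.
  have : `|q| < 1 by rewrite ger0_norm.
  move/hg => /cvgrPdist_lt /(_ e e0) /near_ex [N HN].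
  exists N; have := HN N (leqnn N).
  rewrite sub0r normrN /geometric /D => h; apply: le_lt_trans h.
  by rewrite mulrAC ler_norm.
have cy : cvgn y.
  apply/cauchy_cvgP/cauchy_exP => eps eps0.
  have er0 : 0 < complex.Re eps by move: eps0; rewrite ltcE => /andP[].
  have [N HN] := Dsmall _ er0.
  exists (y N); exists N => // n /= hn.
  rewrite -ball_normE /ball_ /= nrmE.
  rewrite [X in _ < X]ge0_ReE ?ltW //.
  rewrite ltcR nrmB -(subnKC hn).
  apply: (le_lt_trans (bnd _ _)); apply: le_lt_trans HN.
  by rewrite lerBlDr lerDl.
set l := limn y.
have yl : y @ \oo --> l by exact: cy.
have Sl : S l.
  have := @closed_cvg nat V \oo _ y S hSc; apply => //; exact: nearW.
exists l; split => //.
have : nrm (T l - l) = 0.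
  apply/le_anti; rewrite nrm_ge0 andbT; apply: le0_eps => e e0.
  have e2 : 0 < e / 2 by rewrite divr_gt0.
  have e2C : 0 < (e/2)%:C by rewrite ltcR.
  have [N HN] := near_ex _ ((cvgrPdist_lt _ _).1 yl _ e2C).
  have h1 : nrm (l - y N) < e / 2 by rewrite -ltcR -nrmE; exact: HN.
  have h2 : nrm (l - y N.+1) < e / 2 by rewrite -ltcR -nrmE; exact: HN.
  have -> : T l - l = (T l - T (y N)) + (y N.+1 - l) by rewrite addrA subrK.
  apply: (le_lt_trans (nrmD _ _)).
  apply: (@le_lt_trans _ _ (q * nrm (l - y N) + nrm (y N.+1 - l))).
    by apply: lerD => //; apply: Tc.
  rewrite [nrm (y N.+1 - l)]nrmB [X in _ < X](splitr e); apply: ler_ltD => //.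
  apply: (le_trans (ler_wpM2l hq0 (ltW h1))).
  by apply: ler_piMl; exact: ltW.
rewrite /T => /nrm_eq0 /eqP; rewrite addrC addrCA addKr subr_eq0 => /eqP ->. done.
Qed.

End C.

End Helpers3.

Theorem mainTheorem5 (R : realType) (V : completeNormedModType R[i])
    (ip : V -> V -> R[i]) (J : set int) (Hs : int -> set V) (K : V -> V)
    (Lam Theta LamAdj : int -> V -> V) (U : V -> V) :
  is_inner_product ip ->
  separable_space V ->
  (forall j, J j -> closed_subspace (Hs j)) ->
  bounded_linear K -> closed (range K) ->
  (forall j, J j ->
     [/\ bounded_linear (Lam j), bounded_linear (Theta j),
         (forall f, Hs j (Lam j f)) & (forall f, Hs j (Theta j f))]) ->
  (* LamAdj j is the adjoint Lam_j^* : H_j -> H of Lam_j : H -> H_j *)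
  (forall j, J j -> forall g f, Hs j g -> ip (LamAdj j g) f = ip g (Lam j f)) ->
  gBessel_on setT J Lam -> gBessel_on setT J Theta ->
  (* U : R(K) -> R(K), U f = sum_j Lam_j^* Theta_j f *)
  (forall f, range K f ->
     HasSum J (fun j => LamAdj j (Theta j f)) (U f) /\ range K (U f)) ->
  (opnorm_on (range K) (fun f => (f - U f)%R) < 1%:E)%E ->
  exists Uinv : V -> V,
    [/\ (forall f, range K f -> [/\ range K (Uinv f), U (Uinv f) = f & Uinv (U f) = f]),
        bounded_linear_on (range K) Uinv,
        gBessel_on (range K) J (fun j f => Theta j (Uinv f)) &
        (forall f, range K f -> HasSum J (fun j => LamAdj j (Theta j (Uinv f))) f)].
Proof.
move=> [ipL ipC ipN] _ _ [Klin _] Kc HLT Hadj _ [B [B0 HB]] HU Hop.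
set S := range K.
have S0 : S 0.
  exists 0 => //; have h := Klin 1 0 0; rewrite !scale1r addr0 in h.
  by have := subrr (K 0); rewrite {1}h addrK.
have hSlin a x y : S x -> S y -> S (a *: x + y).
  by move=> [x' _ <-] [y' _ <-]; exists (a *: x' + y') => //; rewrite Klin.
have ipB x y z : ip (x - y) z = ip x z - ip y z.
  by rewrite addrC -scaleN1r ipL mulN1r addrC.
have ip0 x : ip x x = 0 -> x = 0.
  by move=> hx; apply/normr0_eq0/eqP; rewrite -sqrf_eq0 ipN hx.
have LAlin j a x y : J j -> LamAdj j (Theta j (a *: x + y)) =
    a *: LamAdj j (Theta j x) + LamAdj j (Theta j y).
  move=> Jj; have [_ [Tlin _] _ HT] := HLT j Jj.
  apply/eqP; rewrite -subr_eq0; apply/eqP/ip0.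
  set d := _ - _.
  suff hd : forall f, ip d f = 0 by apply: hd.
  move=> f; rewrite /d ipB Hadj // Tlin ipL -!Hadj // ipL subrr //.
have hUlin a x y : S x -> S y -> U (a *: x + y) = a *: U x + U y.
  move=> Sx Sy.
  have [h1 _] := HU _ (hSlin a x y Sx Sy).
  have [hx _] := HU _ Sx; have [hy _] := HU _ Sy.
  apply: (HasSum_unique _ _ _ h1).
  apply: (HasSum_ext _ _ _ _ (HasSum_lin _ _ _ _ a hx hy)).
  by move=> j Jj; rewrite LAlin.
have hUS f : S f -> S (U f) by move=> /HU[].
have [q [q0 q1 hq]] : exists q : R,
    [/\ 0 <= q, q < 1 & forall f, S f -> nrm f <= 1 -> nrm (f - U f) <= q].
  move: Hop; rewrite /opnorm_on; set sup := ereal_sup _.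
  have ub f : S f -> nrm f <= 1 -> ((nrm (f - U f))%:E <= sup)%E.
    by move=> Sf nf; apply: ereal_sup_ubound; exists f.
  case: sup ub => [r| |] ub Hr.
  - exists (Num.max r 0); split.
    + by rewrite le_max lexx orbT.
    + by rewrite gt_max ltr01 andbT -lte_fin.
    + by move=> f Sf nf; have := ub f Sf nf; rewrite lee_fin => hh; rewrite le_max hh.
  - by rewrite ltNge leey in Hr.
  - exists 0; split => // f Sf nf.
    by have := ub f Sf nf; rewrite leeNy_eq.
have U0 : U 0 = 0.
  have h := hUlin 1 0 0 S0 S0; rewrite !scale1r addr0 in h.
  by have := subrr (U 0); rewrite {1}h addrK.
have hqb f : S f -> nrm (f - U f) <= q * nrm f.
  move=> Sf; have := nrm_ge0 f; rewrite le_eqVlt => /orP[/eqP f0|fpos].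
    by have fz := nrm_eq0 _ (esym f0); rewrite fz U0 subrr nrm0 mulr0.
  set t := nrm f in fpos *; set c := real_complex _ (t^-1).
  have Sf' : S (c *: f) by rewrite -[c *: f]addr0; apply: hSlin.
  have Uf' : U (c *: f) = c *: U f by rewrite -[c *: f]addr0 hUlin // U0 addr0.
  have nf' : nrm (c *: f) = 1.
    by rewrite nrmZR ger0_norm ?invr_ge0 ?ltW // mulVf ?gt_eqF.
  have nf1 : nrm (c *: f) <= 1 by rewrite nf'.
  have := hq _ Sf' nf1; rewrite Uf' -scalerBr nrmZR ger0_norm; last by rewrite invr_ge0 ltW.
  move=> h; have := ler_wpM2l (ltW fpos) h.
  by rewrite mulrA mulfV ?gt_eqF // mul1r [t * q]mulrC.
have hlow f : S f -> (1 - q) * nrm f <= nrm (U f).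
  move=> Sf; have h := nrmD (f - U f) (U f); rewrite subrK in h.
  have := hqb f Sf; nra.
have Ssub x y : S x -> S y -> S (x - y).
  by move=> Sx Sy; rewrite addrC -scaleN1r; apply: hSlin.
have hinj x y : S x -> S y -> U x = U y -> x = y.
  move=> Sx Sy e; apply/subr0_eq/nrm_eq0.
  have := hlow _ (Ssub x y Sx Sy).
  have -> : U (x - y) = U x - U y.
    by rewrite addrC -scaleN1r hUlin // scaleN1r addrC.
  rewrite e subrr nrm0; have := nrm_ge0 (x - y); nra.
have surj g : S g -> exists f, S f /\ U f = g.
  exact: (@surjU R V S U q hSlin Kc hUS hUlin q0 q1 hqb).
pose Uinv g := xget 0 [set f | S f /\ U f = g].
have UinvP g : S g -> S (Uinv g) /\ U (Uinv g) = g.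
  by move=> Sg; apply: (xgetPex 0 (surj g Sg)).
have hbd f : S f -> nrm (Uinv f) <= (1 - q)^-1 * nrm f.
  move=> Sf; have [f1 f2] := UinvP f Sf.
  have q1' : 0 < 1 - q by rewrite subr_gt0.
  rewrite -(ler_pM2l q1') mulrA mulfV ?gt_eqF // mul1r.
  by have := hlow _ f1; rewrite f2.
exists Uinv; split.
- move=> f Sf; have [h1 h2] := UinvP f Sf; split => //.
  have [h3 h4] := UinvP _ (hUS f Sf); by apply: hinj.
- split.
  + move=> a x y Sx Sy; have [x1 x2] := UinvP x Sx; have [y1 y2] := UinvP y Sy.
    have [z1 z2] := UinvP _ (hSlin a x y Sx Sy).
    apply: hinj => //; first exact: hSlin.
    by rewrite z2 hUlin // x2 y2.
  + by exists ((1 - q)^-1).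
- exists (B * ((1 - q)^-1) ^+ 2); split.
    by rewrite mulr_gt0 // exprn_gt0 // invr_gt0 subr_gt0.
  move=> f Sf F FJ; have [f1 f2] := UinvP f Sf.
  apply: (le_trans (HB _ I F FJ)).
  rewrite -mulrA -exprMn; apply: ler_wpM2l; first exact: ltW.
  by rewrite !expr2; apply: ler_pM; rewrite ?nrm_ge0 ?hbd.
- move=> f Sf; have [f1 f2] := UinvP f Sf; have [h _] := HU _ f1.
  by rewrite f2 in h.
Qed.
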